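(* Let $N$ be a set of $n$ agents and $O$ a set of $n$ objects, each agent $i$ having a strict linear order $\succ_i$ over $O$ and each object $o$ a strict linear order $\succ_o$ over $N$. If a random matching $p$ is claimwise weakly stable, then it is weakly sd-stable.
   Context: A random matching is an $n\times n$ bistochastic matrix $p=[p(i,o)]$; it is deterministic if entries are in $\{0,1\}$. $p$ is claimwise weakly stable if for each $(i,o)\in N\times O$ and each $j\in N$ with $i\succ_o j$, $\sum_{o':o'\succ_i o}p(i,o')\ge p(j,o)$ (with strict preferences this coincides with claimwise stability). For agent $i$ with $o_1\succ_i\dots\succ_i o_n$, $p(i)\succsim_i^{sd}q(i)$ if $\sum_{l=1}^k p(i,o_l)\ge\sum_{l=1}^k q(i,o_l)$ for all $k$, and $p(i)\succ_i^{sd}q(i)$ if additionally $p(i)\neq q(i)$; for object $o$ with $i_1\succ_o\dots\succ_o i_n$, $p(o)\succsim_o^{sd}q(o)$ if $\sum_{l=1}^k p(i_l,o)\ge\sum_{l=1}^k q(i_l,o)$ for all $k$, and $p(o)\succ_o^{sd}q(o)$ if additionally $p(o)\ne q(o)$. $p$ is strongly sd-blocked by $(i,o)$ if there is a deterministic matching $q\ne p$ with $q(i,o)=1$, $q(i)\succ_i^{sd}p(i)$ and $q(o)\succ_o^{sd}p(o)$. $p$ is weakly sd-stable if no pair $(i,o)$ strongly sd-blocks $p$. *)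

(* Defs.v *)
From HB Require Import structures.
From mathcomp Require Import all_boot all_order all_fingroup all_algebra.
Set Implicit Arguments. Unset Strict Implicit. Unset Printing Implicit Defensive.
Import Order.TTheory GRing.Theory Num.Theory.
Local Open Scope ring_scope.

(* Agents N = 'I_n, objects O = 'I_n.  A strict linear order over a finite set
   of n elements is given by its ranking: a permutation s with s l = the
   (l+1)-th most preferred element. *)

Definition prefers (n : nat) (s : {perm 'I_n}) (a b : 'I_n) : bool :=
  (s^-1%g a < s^-1%g b)%N.

(* p(i,o) = p i o : rows are agents, columns objects *)
Definition bistochastic (R : realFieldType) (n : nat) (p : 'M[R]_n) : Prop :=
  [/\ forall i o, 0 <= p i o,
      forall i, \sum_(o < n) p i o = 1
    & forall o, \sum_(i < n) p i o = 1].

Definition deterministic (R : realFieldType) (n : nat) (p : 'M[R]_n) : Prop :=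
  forall i o, p i o = 0 \/ p i o = 1.

Definition claimwise_weakly_stable (R : realFieldType) (n : nat)
  (prefA prefO : 'I_n -> {perm 'I_n}) (p : 'M[R]_n) : Prop :=
  forall (i o j : 'I_n), prefers (prefO o) i j ->
    p j o <= \sum_(o' < n | prefers (prefA i) o' o) p i o'.

Definition sd_agent_ge (R : realFieldType) (n : nat)
  (prefA : 'I_n -> {perm 'I_n}) (i : 'I_n) (p q : 'M[R]_n) : Prop :=
  forall k : nat, \sum_(l < n | (l < k)%N) q i (prefA i l)
                  <= \sum_(l < n | (l < k)%N) p i (prefA i l).

Definition sd_agent_gt (R : realFieldType) (n : nat)
  (prefA : 'I_n -> {perm 'I_n}) (i : 'I_n) (p q : 'M[R]_n) : Prop :=
  sd_agent_ge prefA i p q /\ exists o, p i o <> q i o.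

Definition sd_object_ge (R : realFieldType) (n : nat)
  (prefO : 'I_n -> {perm 'I_n}) (o : 'I_n) (p q : 'M[R]_n) : Prop :=
  forall k : nat, \sum_(l < n | (l < k)%N) q (prefO o l) o
                  <= \sum_(l < n | (l < k)%N) p (prefO o l) o.

Definition sd_object_gt (R : realFieldType) (n : nat)
  (prefO : 'I_n -> {perm 'I_n}) (o : 'I_n) (p q : 'M[R]_n) : Prop :=
  sd_object_ge prefO o p q /\ exists i, p i o <> q i o.

Definition strongly_sd_blocks (R : realFieldType) (n : nat)
  (prefA prefO : 'I_n -> {perm 'I_n}) (p : 'M[R]_n) (i o : 'I_n) : Prop :=
  exists q : 'M[R]_n,
    [/\ bistochastic q, deterministic q, q <> p & q i o = 1] /\
    sd_agent_gt prefA i q p /\ sd_object_gt prefO o q p.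

Definition weakly_sd_stable (R : realFieldType) (n : nat)
  (prefA prefO : 'I_n -> {perm 'I_n}) (p : 'M[R]_n) : Prop :=
  forall i o, ~ strongly_sd_blocks prefA prefO p i o.

(* Main.v *)
Require Import Defs.
From mathcomp Require Import all_boot all_order all_fingroup all_algebra.
Import Order.TTheory GRing.Theory Num.Theory.
Local Open Scope ring_scope.

Lemma rest0 (R : realFieldType) (n : nat) (F : 'I_n -> R) (a : 'I_n) :
  (forall x, 0 <= F x) -> \sum_(x < n) F x = 1 -> F a = 1 ->
  forall b, b != a -> F b = 0.
Proof.
move=> F0 Fs Fa b ba.
have : \sum_(x < n | x != a) F x = 0.
  move: Fs; rewrite (bigD1 a) //= Fa => E.
  by rewrite -[LHS](addKr 1) E addNr.
by move/psumr_eq0P => H; apply: H.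
Qed.

Lemma sd_reindex (R : realFieldType) (n : nat) (s : {perm 'I_n}) (F : 'I_n -> R) (o : 'I_n) :
  \sum_(l < n | (l < s^-1%g o)%N) F (s l) = \sum_(o' < n | prefers s o' o) F o'.
Proof.
rewrite (reindex_inj (h := (s^-1)%g) (@perm_inj _ _)) /=.
by apply: eq_bigr => x _; rewrite permKV.
Qed.

Lemma sum_le0 (R : realFieldType) (n : nat) (P : pred 'I_n) (F : 'I_n -> R) :
  (forall x, 0 <= F x) -> \sum_(x < n | P x) F x <= 0 -> forall x, P x -> F x = 0.
Proof.
move=> F0 H; apply/psumr_eq0P => //.
by apply/le_anti; rewrite H sumr_ge0.
Qed.

Theorem proposition33 (R : realFieldType) (n : nat)
  (prefA prefO : 'I_n -> {perm 'I_n}) (p : 'M[R]_n) :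
  bistochastic p ->
  claimwise_weakly_stable prefA prefO p ->
  weakly_sd_stable prefA prefO p.
Proof.
move=> [p0 prow pcol] cws i o [q [[[q0 qrow qcol] qdet qnp qio] [[sa [o1 ne1]] [so _]]]].
have qi0 : forall o', o' != o -> q i o' = 0 by apply: rest0.
have qo0 : forall j, j != i -> q j o = 0 by apply: (@rest0 R n (fun j => q j o) i).
have irr : forall s (x : 'I_n), ~~ prefers s x x by move=> s x; rewrite /prefers ltnn.
have Ha := sa ((prefA i)^-1%g o).
rewrite !sd_reindex in Ha.
have Hq : \sum_(o' < n | prefers (prefA i) o' o) q i o' = 0.
  apply: big1 => x Hx; apply: qi0; apply/eqP => E; subst x; by rewrite (negbTE (irr _ _)) in Hx.
rewrite Hq in Ha.
have Ho := so ((prefO o)^-1%g i).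
rewrite (@sd_reindex R n (prefO o) (fun j => p j o) i) (@sd_reindex R n (prefO o) (fun j => q j o) i) in Ho.
have Hq2 : \sum_(j < n | prefers (prefO o) j i) q j o = 0.
  apply: big1 => x Hx; apply: qo0; apply/eqP => E; subst x; by rewrite (negbTE (irr _ _)) in Hx.
rewrite Hq2 in Ho.
have pj0 : forall j, j != i -> p j o = 0.
  move=> j ji.
  have [hij|hji|eij] : [\/ prefers (prefO o) i j, prefers (prefO o) j i | j = i].
    rewrite /prefers; case: (ltngtP ((prefO o)^-1%g i) ((prefO o)^-1%g j)) => H.
    - by apply: Or31.
    - by apply: Or32.
    - by apply: Or33; apply: (@perm_inj _ ((prefO o)^-1%g)); apply: val_inj; rewrite /= H.
  - apply/le_anti; rewrite p0 andbT; apply: le_trans (cws i o j hij) Ha.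
  - exact (@sum_le0 R n _ (fun j => p j o) (fun x => p0 x o) Ho j hji).
  - by rewrite eij eqxx in ji.
have pio : p i o = 1.
  move: (pcol o); rewrite (bigD1 i) //= big1 ?addr0 //.
have pi0 : forall o', o' != o -> p i o' = 0 by apply: rest0.
apply: ne1; case: (eqVneq o1 o) => [->|h]; first by rewrite qio pio.
by rewrite qi0 // pi0.
Qed.
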